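(* Let $(S,\tau_S)$ be a topological monoid with zero, $\lambda\ge1$ a cardinal, and let $(B^0_\lambda(S),\tau_B)$ be a topological Brandt $\lambda^0$-extension of $(S,\tau_S)$ in the class of Hausdorff topological semigroups (i.e. $(B^0_\lambda(S),\tau_B)$ is a Hausdorff topological semigroup and for some $\alpha\in\lambda$ the map $s\mapsto(\alpha,s,\alpha)$, $0_S\mapsto0$, is a homeomorphism of $S$ onto $S_{\alpha,\alpha}$). Then $(B^0_\lambda(S),\tau_B)$ is pseudocompact if and only if $\lambda$ is finite and $(S,\tau_S)$ is pseudocompact.
   Context: A topological semigroup is a Hausdorff space with jointly continuous associative operation. For a monoid $S$ with zero $0_S$, $B^0_\lambda(S)=(\lambda\times (S\setminus\{0_S\})\times\lambda)\cup\{0\}$ with $(\alpha,a,\beta)(\gamma,b,\delta)=(\alpha,ab,\delta)$ if $\beta=\gamma$ and $ab\ne0_S$, and $0$ otherwise; for $\alpha,\beta\in\lambda$, $S_{\alpha,\beta}=\{(\alpha,s,\beta):s\in S\setminus\{0_S\}\}\cup\{0\}$. Pseudocompact: every locally finite family of non-empty open sets is finite. *)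

(* Defs.v *)
From Stdlib Require Import List Classical ClassicalEpsilon.

Definition is_topology {X : Type} (T : (X -> Prop) -> Prop) : Prop :=
  T (fun _ => True) /\
  (forall U V, T U -> T V -> T (fun x => U x /\ V x)) /\
  (forall (I : Type) (F : I -> X -> Prop),
      (forall i, T (F i)) -> T (fun x => exists i, F i x)).

Definition hausdorff {X : Type} (T : (X -> Prop) -> Prop) : Prop :=
  forall x y : X, x <> y ->
    exists U V, T U /\ T V /\ U x /\ V y /\ (forall w, ~ (U w /\ V w)).

Definition prod_top {X Y : Type} (TX : (X -> Prop) -> Prop) (TY : (Y -> Prop) -> Prop)
  : (X * Y -> Prop) -> Prop :=
  fun W => forall p, W p ->
    exists U V, TX U /\ TY V /\ U (fst p) /\ V (snd p) /\
      (forall x y, U x -> V y -> W (x, y)).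

Definition continuous {X Y : Type} (TX : (X -> Prop) -> Prop) (TY : (Y -> Prop) -> Prop)
  (f : X -> Y) : Prop :=
  forall V, TY V -> TX (fun x => V (f x)).

Definition topological_semigroup {X : Type} (T : (X -> Prop) -> Prop) (mul : X -> X -> X) : Prop :=
  is_topology T /\ hausdorff T /\
  (forall x y w, mul x (mul y w) = mul (mul x y) w) /\
  continuous (prod_top T T) T (fun p => mul (fst p) (snd p)).

Definition monoid_with_zero {S : Type} (mul : S -> S -> S) (one z : S) : Prop :=
  (forall x y w, mul x (mul y w) = mul (mul x y) w) /\
  (forall x, mul one x = x) /\ (forall x, mul x one = x) /\
  (forall x, mul z x = z) /\ (forall x, mul x z = z) /\
  one <> z.

Definition finite_type (I : Type) : Prop := exists l : list I, forall i, In i l.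

Definition locally_finite {X I : Type} (T : (X -> Prop) -> Prop) (F : I -> X -> Prop) : Prop :=
  forall x, exists U, T U /\ U x /\
    exists l : list I, forall i, (exists y, U y /\ F i y) -> In i l.

Definition pseudocompact {X : Type} (T : (X -> Prop) -> Prop) : Prop :=
  forall (I : Type) (F : I -> X -> Prop),
    (forall i, T (F i) /\ exists x, F i x) -> locally_finite T F -> finite_type I.

(* The Brandt lambda^0-extension B^0_lambda(S): None is the zero, Some (a,s,b) with s <> 0_S. *)
Definition Bcar (L S : Type) (z : S) : Type := option (L * {s : S | s <> z} * L).

Definition Bmul {L S : Type} (mul : S -> S -> S) (z : S)
  (x y : Bcar L S z) : Bcar L S z :=
  match x, y with
  | Some (a, s, b), Some (c, t, d) =>
      match excluded_middle_informative (b = c /\ mul (proj1_sig s) (proj1_sig t) <> z) with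
      | left H => Some (a, exist _ (mul (proj1_sig s) (proj1_sig t)) (proj2 H), d)
      | right _ => None
      end
  | _, _ => None
  end.

Definition Saa {L S : Type} (z : S) (alpha : L) : Bcar L S z -> Prop :=
  fun x => match x with
           | None => True
           | Some (a, _, b) => a = alpha /\ b = alpha
           end.

Definition Bemb {L S : Type} (z : S) (alpha : L) (s : S) : Bcar L S z :=
  match excluded_middle_informative (s = z) with
  | left _ => None
  | right H => Some (alpha, exist _ s H, alpha)
  end.

Definition homeomorphism_onto {X Y : Type} (TX : (X -> Prop) -> Prop) (TY : (Y -> Prop) -> Prop)
  (f : X -> Y) (A : Y -> Prop) : Prop :=
  (forall x1 x2, f x1 = f x2 -> x1 = x2) /\
  (forall y, A y <-> exists x, f x = y) /\
  (forall U, TX U <-> exists V, TY V /\ forall x, U x <-> V (f x)).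

Definition topological_Brandt_extension {L S : Type} (mul : S -> S -> S) (z : S)
  (TS : (S -> Prop) -> Prop) (TB : (Bcar L S z -> Prop) -> Prop) : Prop :=
  topological_semigroup TB (Bmul mul z) /\
  exists alpha : L, homeomorphism_onto TS TB (Bemb z alpha) (Saa z alpha).

(* Main.v *)
Require Import Defs.
From Stdlib Require Import List Classical ClassicalEpsilon FunctionalExtensionality PropExtensionality.

Lemma open_of_local {X : Type} (T : (X -> Prop) -> Prop) (A : X -> Prop) :
  is_topology T ->
  (forall x, A x -> exists U, T U /\ U x /\ forall y, U y -> A y) -> T A.
Proof.
  intros [_ [_ Hu]] H.
  set (I := {U : X -> Prop | T U /\ forall y, U y -> A y}).
  assert (E : A = (fun x => exists i : I, proj1_sig i x)).
  { apply functional_extensionality; intro x; apply propositional_extensionality; split.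
    - intro Ax. destruct (H x Ax) as [U [TU [Ux HU]]].
      exists (exist _ U (conj TU HU)); exact Ux.
    - intros [i Ux]. exact (proj2 (proj2_sig i) x Ux). }
  rewrite E. apply Hu. intro i; exact (proj1 (proj2_sig i)).
Qed.

Lemma cont2 {X : Type} (T : (X -> Prop) -> Prop) (mul : X -> X -> X) O a b :
  topological_semigroup T mul -> T O -> O (mul a b) ->
  exists A B, T A /\ T B /\ A a /\ B b /\ forall x y, A x -> B y -> O (mul x y).
Proof.
  intros [_ [_ [_ Hc]]] HO Hab.
  destruct (Hc _ HO (a, b) Hab) as [A [B [TA [TB [Aa [Bb H]]]]]].
  exists A, B; repeat split; auto.
Qed.

Lemma transl_open {X : Type} (T : (X -> Prop) -> Prop) (mul : X -> X -> X) O c d :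
  topological_semigroup T mul -> T O -> T (fun y => O (mul c (mul y d))).
Proof.
  intros Hs HO. assert (Ht : is_topology T) by apply Hs.
  apply open_of_local; auto. intros y Hy.
  destruct (cont2 T mul O c (mul y d) Hs HO Hy) as [A [B [TA [TB [Ac [Bb H]]]]]].
  destruct (cont2 T mul B y d Hs TB Bb) as [A' [B' [TA' [TB' [Ay [Bd H']]]]]].
  exists A'; repeat split; auto.
Qed.

Lemma Hd_top {X : Type} (T : (X -> Prop) -> Prop) (U V : X -> Prop) :
  is_topology T -> T U -> T V -> T (fun x => U x /\ V x).
Proof. intros [_ [H _]]; apply H. Qed.

Lemma list_sig (J : Type) (P : J -> Prop) (l : list J) :
  exists l' : list {j | P j}, forall j', In (proj1_sig j') l -> In j' l'.
Proof.
  induction l as [|a l IH]; [exists nil; simpl; tauto|].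
  destruct IH as [l' Hl'].
  destruct (classic (P a)) as [Pa|nPa].
  - exists (exist _ a Pa :: l'). intros j' [E|E]; [left|right; auto].
    destruct j' as [j pj]; simpl in E; subst; f_equal; apply proof_irrelevance.
  - exists l'. intros j' [E|E]; auto. exfalso; apply nPa; rewrite E; apply proj2_sig.
Qed.

Lemma list_two (I X : Type) (f : I -> X) (finj : forall i j, f i = f j -> i = j) (c d : X) :
  exists l, forall i, f i = c \/ f i = d -> In i l.
Proof.
  assert (H1 : forall c, exists l, forall i, f i = c -> In i l).
  { intro c0. destruct (classic (exists i, f i = c0)) as [[i0 Hi0]|N].
    - exists (i0 :: nil). intros i Hi; left; apply finj; congruence.
    - exists nil. intros i Hi; exfalso; eauto. }
  destruct (H1 c) as [l1 Hl1], (H1 d) as [l2 Hl2].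
  exists (l1 ++ l2). intros i [E|E]; apply in_or_app; auto.
Qed.

Lemma list_union (A J : Type) (Q : A -> J -> Prop) (la : list A) :
  (forall a, exists l, forall j, Q a j -> In j l) ->
  exists l, forall a j, In a la -> Q a j -> In j l.
Proof.
  intro H. induction la as [|a la IH]; [exists nil; simpl; tauto|].
  destruct IH as [l Hl], (H a) as [l1 Hl1].
  exists (l1 ++ l). intros a' j [E|E] Q'; apply in_or_app; [subst; auto|eauto].
Qed.

Section Br.
Context (S : Type) (mul : S -> S -> S) (one z : S) (L : Type)
  (Hm : monoid_with_zero mul one z).

Definition Hone : one <> z := proj2 (proj2 (proj2 (proj2 (proj2 Hm)))).
Definition e (a b : L) : Bcar L S z := Some (a, exist (fun s => s <> z) one Hone, b).
Definition M := Bmul (L:=L) mul z.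
Definition sw (a b c d : L) (y : Bcar L S z) := M (M (e a b) y) (e c d).

Lemma sig_ext (s t : {s : S | s <> z}) : proj1_sig s = proj1_sig t -> s = t.
Proof. destruct s, t; simpl; intro; subst; f_equal; apply proof_irrelevance. Qed.

Lemma Bmul_match a s b t d (H : mul (proj1_sig s) (proj1_sig t) <> z) :
  M (Some (a, s, b)) (Some (b, t, d)) = Some (a, exist (fun u => u <> z) _ H, d).
Proof.
  unfold M, Bmul. destruct (excluded_middle_informative _) as [H'|H'].
  - f_equal; f_equal; f_equal; apply sig_ext; reflexivity.
  - exfalso; apply H'; auto.
Qed.

Lemma Bmul_mis a s b c t d : b <> c -> M (Some (a, s, b)) (Some (c, t, d)) = None.
Proof.
  intro H. unfold M, Bmul. destruct (excluded_middle_informative _) as [H'|H'].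
  - exfalso; apply H, H'.
  - reflexivity.
Qed.

Lemma mul1l x : mul one x = x. Proof. apply Hm. Qed.
Lemma mul1r x : mul x one = x. Proof. apply Hm. Qed.

Lemma sw_some a b c d s : sw a b c d (Some (b, s, c)) = Some (a, s, d).
Proof.
  unfold sw, e.
  assert (H1 : mul (proj1_sig (exist (fun u => u <> z) one Hone)) (proj1_sig s) <> z) by (simpl; rewrite mul1l; apply proj2_sig).
  rewrite (Bmul_match a _ b s c H1).
  assert (H2 : mul (proj1_sig (exist (fun u => u <> z) (mul (proj1_sig (exist (fun u => u <> z) one Hone)) (proj1_sig s)) H1)) (proj1_sig (exist (fun u => u <> z) one Hone)) <> z)
    by (simpl; rewrite mul1r, mul1l; apply proj2_sig).
  rewrite (Bmul_match a _ c _ d H2).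
  f_equal; f_equal; f_equal; apply sig_ext; simpl; rewrite mul1r, mul1l; reflexivity.
Qed.

Lemma sw_None a b c d : sw a b c d None = None.
Proof. reflexivity. Qed.

Lemma sw_inv a b c d y : sw a b c d y <> None -> exists s, y = Some (b, s, c).
Proof.
  intro H. destruct y as [[[b' s] c']|]; [|exfalso; apply H; reflexivity].
  destruct (classic (b' = b)) as [<-|Hb].
  - destruct (classic (c' = c)) as [<-|Hc]; [eauto|].
    exfalso; apply H. unfold sw, e.
    assert (H1 : mul (proj1_sig (exist (fun u => u <> z) one Hone)) (proj1_sig s) <> z) by (simpl; rewrite mul1l; apply proj2_sig).
    rewrite (Bmul_match a _ b' s c' H1). apply Bmul_mis; auto.
  - exfalso; apply H. unfold sw, e. rewrite Bmul_mis; auto.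
Qed.

Lemma sw_open (TB : (Bcar L S z -> Prop) -> Prop) O a b c d :
  topological_semigroup TB M -> TB O -> TB (fun y => O (sw a b c d y)).
Proof.
  intros Hs HO.
  assert (E : (fun y => O (sw a b c d y)) = (fun y => O (M (e a b) (M y (e c d))))).
  { apply functional_extensionality; intro y; unfold sw.
    destruct Hs as [_ [_ [Ha _]]]. rewrite Ha; reflexivity. }
  rewrite E. apply transl_open; auto.
Qed.

Lemma Bemb_some (alpha : L) (s : {s : S | s <> z}) :
  Bemb z alpha (proj1_sig s) = Some (alpha, s, alpha).
Proof.
  unfold Bemb. destruct (excluded_middle_informative _) as [H|H].
  - exfalso; exact (proj2_sig s H).
  - f_equal; f_equal; f_equal; apply sig_ext; reflexivity.
Qed.

Lemma Bemb_z (alpha : L) : Bemb z alpha z = None.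
Proof.
  unfold Bemb. destruct (excluded_middle_informative _) as [H|H]; [reflexivity|].
  exfalso; apply H; reflexivity.
Qed.


Definition Sstar (a b : L) (y : Bcar L S z) := exists s, y = Some (a, s, b).

Lemma Sstar_open (TB : (Bcar L S z -> Prop) -> Prop) a b :
  topological_semigroup TB M -> TB (Sstar a b).
Proof.
  intro Hs. assert (Ht : is_topology TB) by apply Hs.
  apply open_of_local; auto. intros y [s ->].
  pose proof Hs as [_ [Hh _]].
  destruct (Hh (Some (a, s, b)) None ltac:(discriminate)) as [U [V [TU [TV [Uy [VN Hd]]]]]].
  exists (fun w => U w /\ U (sw a a b b w)). repeat split.
  - apply Hd_top; auto. apply sw_open; auto.
  - auto.
  - rewrite sw_some; auto.
  - intros w [_ Uw]. apply (sw_inv a a b b).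
    intro E; rewrite E in Uw; apply (Hd None); auto.
Qed.

Lemma fin_L (TB : (Bcar L S z -> Prop) -> Prop) (Hs : topological_semigroup TB M)
  (alpha : L) : pseudocompact TB -> finite_type L.
Proof.
  intros Hp.
  pose proof Hs as [Ht [Hh _]].
  destruct (Hh (e alpha alpha) None ltac:(discriminate)) as [U [V [TU [TV [Ue [VN Hd]]]]]].
  destruct (cont2 TB M V None None Hs TV VN) as [A [B [TA [TB' [AN [BN HAB]]]]]].
  set (W := fun x => A x /\ B x).
  set (I := {b : L | b <> alpha}).
  assert (Hex : forall i : I, exists O, TB O /\ (exists x, O x) /\ (forall x, O x -> ~ W x) /\
     (forall x, O x -> Sstar alpha (proj1_sig i) x \/ Sstar (proj1_sig i) alpha x)).
  { intros [b Hb]; simpl.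
    assert (Hp1 : U (M (e alpha b) (e b alpha))).
    { unfold e.
      assert (H1 : mul (proj1_sig (exist (fun u => u <> z) one Hone))
                       (proj1_sig (exist (fun u => u <> z) one Hone)) <> z)
        by (simpl; rewrite mul1l; exact Hone).
      rewrite (Bmul_match alpha _ b _ alpha H1).
      replace (Some _) with (e alpha alpha); [exact Ue|].
      unfold e; f_equal; f_equal; f_equal; apply sig_ext; simpl; symmetry; apply mul1l. }
    destruct (cont2 TB M U _ _ Hs TU Hp1) as [A1 [B1 [TA1 [TB1 [A1e [B1e H1']]]]]].
    destruct (classic (exists x, (A1 x /\ Sstar alpha b x) /\ W x)) as [[x [[A1x Sx] Wx]]|N1].
    - destruct (classic (exists y, (B1 y /\ Sstar b alpha y) /\ W y)) as [[y [[B1y Sy] Wy]]|N2].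
      + exfalso. apply (Hd (M x y)). split.
        * apply H1'; auto.
        * destruct Wx, Wy; apply HAB; auto.
      + exists (fun y => B1 y /\ Sstar b alpha y). repeat split.
        * apply Hd_top; auto. apply Sstar_open; auto.
        * exists (e b alpha); split; auto. exists (exist _ one Hone); reflexivity.
        * intros y Hy Wy; apply N2; eauto.
        * intros y [_ Hy]; right; auto.
    - exists (fun y => A1 y /\ Sstar alpha b y). repeat split.
      * apply Hd_top; auto. apply Sstar_open; auto.
      * exists (e alpha b); split; auto. exists (exist _ one Hone); reflexivity.
      * intros y Hy Wy; apply N1; eauto.
      * intros y [_ Hy]; left; auto. }
  set (F := fun i => proj1_sig (constructive_indefinite_description _ (Hex i))).
  assert (HF : forall i, TB (F i) /\ (exists x, F i x) /\ (forall x, F i x -> ~ W x) /\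
     (forall x, F i x -> Sstar alpha (proj1_sig i) x \/ Sstar (proj1_sig i) alpha x)).
  { intro i; unfold F; exact (proj2_sig (constructive_indefinite_description _ (Hex i))). }
  assert (inj : forall i j : I, proj1_sig i = proj1_sig j -> i = j).
  { intros [i pi] [j pj]; simpl; intro; subst; f_equal; apply proof_irrelevance. }
  destruct (Hp I F) as [l Hl].
  - intro i; destruct (HF i) as [? [? _]]; auto.
  - intro x. destruct x as [[[c s] d]|].
    + exists (Sstar c d). split; [apply Sstar_open; auto|]. split; [exists s; reflexivity|].
      destruct (list_two I L (@proj1_sig _ _) inj d c) as [l Hl]. exists l.
      intros i [y [[s' Ey] Fy]]. apply Hl. destruct (HF i) as [_ [_ [_ H4]]].
      destruct (H4 y Fy) as [[t Et]|[t Et]]; rewrite Ey in Et; injection Et; intros.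
      * left; congruence.
      * right; congruence.
    + exists W. split; [apply Hd_top; auto|]. split; [split; auto|]. exists nil.
      intros i [y [Wy Fy]]. exfalso; exact (proj1 (proj2 (proj2 (HF i))) y Fy Wy).
  - exists (alpha :: map (@proj1_sig _ _) l). intro b.
    destruct (classic (b = alpha)) as [->|nb]; [left; auto|right].
    apply (in_map (@proj1_sig _ _) l (exist _ b nb)); auto.
Qed.

Lemma ps_S (TS : (S -> Prop) -> Prop) (TB : (Bcar L S z -> Prop) -> Prop)
  (Hs : topological_semigroup TB M) (alpha : L)
  (Hh : homeomorphism_onto TS TB (Bemb z alpha) (Saa z alpha)) :
  pseudocompact TB -> pseudocompact TS.
Proof.
  intros Hp J F HF Hlf. destruct Hh as [_ [HA HT]].
  set (r := sw alpha alpha alpha alpha).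
  assert (Hr : forall y, exists s, Bemb z alpha s = r y).
  { intro y. apply HA. destruct (classic (r y = None)) as [E|E]; [rewrite E; exact I|].
    destruct (sw_inv _ _ _ _ _ E) as [s ->]. unfold r; rewrite sw_some; simpl; auto. }
  assert (Hr2 : forall s, r (Bemb z alpha s) = Bemb z alpha s).
  { intro s. destruct (classic (s = z)) as [->|ns].
    - rewrite Bemb_z; reflexivity.
    - pose (s' := exist (fun u => u <> z) s ns). change s with (proj1_sig s').
      rewrite Bemb_some. apply sw_some. }
  assert (HV : forall j, exists V, TB V /\ forall x, F j x <-> V (Bemb z alpha x)).
  { intro j; apply HT, HF. }
  set (G := fun j => fun y => proj1_sig (constructive_indefinite_description _ (HV j)) (r y)).
  assert (HG : forall j x, F j x <-> G j (Bemb z alpha x)).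
  { intros j x; unfold G; pose proof (proj2_sig (constructive_indefinite_description _ (HV j))) as [_ HVV].
    rewrite Hr2; apply HVV. }
  assert (HGo : forall j, TB (G j)).
  { intro j; unfold G; pose proof (proj2_sig (constructive_indefinite_description _ (HV j))) as [TV _].
    apply sw_open; auto. }
  apply (Hp J G).
  - intro j; split; [auto|]. destruct (HF j) as [_ [x Fx]]. exists (Bemb z alpha x); apply HG; auto.
  - intro y. destruct (Hr y) as [s Es]. destruct (Hlf s) as [N [TN [Ns [l Hl]]]].
    destruct (HT N) as [HT1 _]. destruct (HT1 TN) as [VN [TVN HVN]].
    exists (fun w => VN (r w)). split; [apply sw_open; auto|].
    split; [rewrite <- Es; apply HVN; auto|].
    exists l. intros j [w [VNw Gw]]. apply Hl. destruct (Hr w) as [t Et]. exists t. split.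
    + apply HVN. rewrite Et. auto.
    + apply HG. unfold G in *. rewrite Hr2, Et. exact Gw.
Qed.

Lemma ps_B (TS : (S -> Prop) -> Prop) (TB : (Bcar L S z -> Prop) -> Prop)
  (Hs : topological_semigroup TB M) (alpha : L)
  (Hh : homeomorphism_onto TS TB (Bemb z alpha) (Saa z alpha)) :
  finite_type L -> pseudocompact TS -> pseudocompact TB.
Proof.
  intros fin Hp J G HG Hlf. destruct Hh as [_ [_ HT]]. destruct fin as [lL HL].
  set (H := fun (p : L * L) j s => G j (sw (fst p) alpha alpha (snd p) (Bemb z alpha s))).
  assert (Hfin : forall p, exists l, forall j, (exists s, H p j s) -> In j l).
  { intro p. set (J' := {j | exists s, H p j s}).
    destruct (Hp J' (fun j' => H p (proj1_sig j'))) as [l' Hl'].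
    - intro j'. split.
      + apply HT. exists (fun y => G (proj1_sig j') (sw (fst p) alpha alpha (snd p) y)).
        split; [apply sw_open; auto; apply (proj1 (HG _))|]. intro x; unfold H; tauto.
      + exact (proj2_sig j').
    - intro s. destruct (Hlf (sw (fst p) alpha alpha (snd p) (Bemb z alpha s))) as [N [TN [Ns [l Hl]]]].
      exists (fun t => N (sw (fst p) alpha alpha (snd p) (Bemb z alpha t))). split.
      + apply HT. exists (fun y => N (sw (fst p) alpha alpha (snd p) y)).
        split; [apply sw_open; auto|]. intro; tauto.
      + split; auto. destruct (list_sig J (fun j => exists s, H p j s) l) as [l'' Hl''].
        exists l''. intros j' [t [Nt Ht]]. apply Hl''. apply Hl.
        exists (sw (fst p) alpha alpha (snd p) (Bemb z alpha t)); split; auto.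
    - exists (map (@proj1_sig _ _) l'). intros j Hj.
      apply (in_map (@proj1_sig _ _) l' (exist _ j Hj)); auto. }
  destruct (list_union (L*L) J (fun p j => exists s, H p j s) (list_prod lL lL) Hfin) as [l Hl].
  exists l. intro j. destruct (HG j) as [_ [y Gy]].
  destruct y as [[[c s] d]|].
  - apply (Hl (c, d)); [apply in_prod; auto|]. exists (proj1_sig s). unfold H; simpl.
    rewrite Bemb_some, sw_some. auto.
  - apply (Hl (alpha, alpha)); [apply in_prod; auto|]. exists z. unfold H; simpl.
    rewrite Bemb_z, sw_None. exact Gy.
Qed.

End Br.

Theorem theorem3p1 (S : Type) (mul : S -> S -> S) (one z : S)
  (TS : (S -> Prop) -> Prop) (L : Type) (TB : (Bcar L S z -> Prop) -> Prop) :
  monoid_with_zero mul one z ->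
  topological_semigroup TS mul ->
  inhabited L ->
  topological_Brandt_extension mul z TS TB ->
  (pseudocompact TB <-> finite_type L /\ pseudocompact TS).
Proof.
  intros Hm HsS Linh [Hs [alpha Hh]].
  split.
  - intro Hp. split.
    + exact (fin_L S mul one z L Hm TB Hs alpha Hp).
    + exact (ps_S S mul one z L Hm TS TB Hs alpha Hh Hp).
  - intros [Hf Hp]. exact (ps_B S mul one z L Hm TS TB Hs alpha Hh Hf Hp).
Qed.
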